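(* Let $\mathcal K$ be a tame topological Kuranishi atlas. Then for all $I\subset J$ in $\mathcal I_{\mathcal K}$, $$\mathrm{im}\,\phi_{IJ}=\mathfrak s_J^{-1}(\mathbb E_{IJ})\subset U_J,\qquad \mathrm{im}\,\widehat\Phi_{IJ}=\mathbb E_{IJ}\cap(\mathfrak s_J\circ\mathrm{pr}_J)^{-1}(\mathbb E_{IJ})\subset\mathbb E_J,$$ and these are closed subsets of $U_J$ resp. $\mathbb E_J$. Moreover, for $J\in\mathcal I_{\mathcal K}$ and $H,I\subset J$ with $H\cap I\neq\emptyset$ we have $\mathrm{im}\,\phi_{HJ}\cap\mathrm{im}\,\phi_{IJ}=\mathrm{im}\,\phi_{(H\cap I)J}$, while if $H\cap I=\emptyset$ then $\mathrm{im}\,\phi_{HJ}\cap\mathrm{im}\,\phi_{IJ}=\mathfrak s_J^{-1}(0_J)$.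
   Context: $X$ is a compact metrizable space. Charts: a topological Kuranishi chart for $X$ with open footprint $F\subset X$ is a tuple $\mathbf K=(U,\mathbb E,\mathfrak s,\psi)$ where $U$ is a separable, locally compact, metrizable space; $\mathbb E$ is a separable, locally compact, metrizable space with continuous maps $\mathrm{pr}:\mathbb E\to U$ and $0:U\to\mathbb E$ with $\mathrm{pr}\circ0=\mathrm{id}_U$; $\mathfrak s:U\to\mathbb E$ is continuous with $\mathrm{pr}\circ\mathfrak s=\mathrm{id}_U$; and $\psi$ is a homeomorphism from $\mathfrak s^{-1}(0):=\{x\in U:\mathfrak s(x)=0(x)\}$ onto $F$. Coordinate changes: for charts $\mathbf K_I,\mathbf K_J$ with $F_I\cap F_J\neq\emptyset$, a coordinate change $\widehat\Phi_{IJ}:\mathbf K_I\to\mathbf K_J$ consists of an open set $U_{IJ}\subset U_I$ with $U_{IJ}\cap\mathfrak s_I^{-1}(0_I)=\psi_I^{-1}(F_I\cap F_J)$ and a topological embedding $\widehat\Phi_{IJ}:\mathrm{pr}_I^{-1}(U_{IJ})\to\mathbb E_J$ such that there is a topological embedding $\phi_{IJ}:U_{IJ}\to U_J$ with $\mathrm{pr}_J\circ\widehat\Phi_{IJ}=\phi_{IJ}\circ\mathrm{pr}_I$, $0_J\circ\phi_{IJ}=\widehat\Phi_{IJ}\circ0_I$ and $\mathfrak s_J\circ\phi_{IJ}=\widehat\Phi_{IJ}\circ\mathfrak s_I$ on $U_{IJ}$, and $\phi_{IJ}=\psi_J^{-1}\circ\psi_I$ on $U_{IJ}\cap\mathfrak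 s_I^{-1}(0_I)$. Atlases: a covering family of basic charts is a finite family $(\mathbf K_i)_{i=1,\dots,N}$ of charts whose footprints cover $X$; $\mathcal I_{\mathcal K}$ is the set of nonempty $I\subset\{1,\dots,N\}$ with $F_I:=\bigcap_{i\in I}F_i\neq\emptyset$. Transition data consist of a chart $\mathbf K_J$ with footprint $F_J$ for each $J\in\mathcal I_{\mathcal K}$ with $|J|\ge2$ (and $\mathbf K_{\{i\}}:=\mathbf K_i$), and a coordinate change $\widehat\Phi_{IJ}:\mathbf K_I\to\mathbf K_J$ for all $I\subsetneq J$ in $\mathcal I_{\mathcal K}$. We set $U_{II}:=U_I$, $\phi_{II}:=\mathrm{id}_{U_I}$, $\widehat\Phi_{II}:=\mathrm{id}_{\mathbb E_I}$. For $I\subsetneq J\subsetneq K$ let $U_{IJK}:=U_{IJ}\cap\phi_{IJ}^{-1}(U_{JK})$. The triple satisfies the weak cocycle condition if $\widehat\Phi_{JK}\circ\widehat\Phi_{IJ}=\widehat\Phi_{IK}$ on $\mathrm{pr}_I^{-1}(U_{IJK}\cap U_{IK})$; the cocycle condition if in addition $U_{IJK}\subset U_{IK}$; the strong cocycle condition if in addition $U_{IJK}=U_{IK}$. A weak topological Kuranishi atlas $\mathcal K$ is a covering family with transition data satisfying the weak cocycle condition for all such triples; a topological Kuranishi atlas is one satisfying the cocycle condition for all triples. Filtrations: a weak topological Kuranishi atlas is filtered if it is equipped with closed subsets $\mathbb E_{IJ}\subset\mathbb E_J$ for all $J\in\mathcal I_{\mathcal K}$ and $I\subset J$ (including $I=\emptyset$)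 such that (i) $\mathbb E_{JJ}=\mathbb E_J$ and $\mathbb E_{\emptyset J}=\mathrm{im}\,0_J$; (ii) $\widehat\Phi_{JK}(\mathrm{pr}_J^{-1}(U_{JK})\cap\mathbb E_{IJ})=\mathbb E_{IK}\cap\mathrm{pr}_K^{-1}(\mathrm{im}\,\phi_{JK})$ for $I\subset J\subsetneq K$; (iii) $\mathbb E_{IJ}\cap\mathbb E_{HJ}=\mathbb E_{(I\cap H)J}$ for $I,H\subset J$; (iv) $\mathrm{im}\,\phi_{IJ}$ is an open subset of $\mathfrak s_J^{-1}(\mathbb E_{IJ})$ for $I\subsetneq J$. Tameness: a filtered weak topological Kuranishi atlas is tame if $U_{IJ}\cap U_{IK}=U_{I(J\cup K)}$ for all $I,J,K\in\mathcal I_{\mathcal K}$ with $I\subset J,K$ (where $U_{IL}:=\emptyset$ if $L\notin\mathcal I_{\mathcal K}$), and $\phi_{IJ}(U_{IK})=U_{JK}\cap\mathfrak s_J^{-1}(\mathbb E_{IJ})$ for all $I\subset J\subset K$ in $\mathcal I_{\mathcal K}$ (equalities of indices allowed). *)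

(* Defs.v *)
From Stdlib Require Import Reals.
From mathcomp Require Import all_boot.
From Stdlib Require List.


Definition is_topology (T : Type) (op : (T -> Prop) -> Prop) : Prop :=
  op (fun _ => True) /\ op (fun _ => False) /\
  (forall A B, op A -> op B -> op (fun x => A x /\ B x)) /\
  (forall (I : Type) (F : I -> T -> Prop),
      (forall i, op (F i)) -> op (fun x => exists i, F i x)).

Record space := Space {
  pt :> Type;
  opens : (pt -> Prop) -> Prop;
  opens_topology : is_topology pt opens }.

Definition opn {X : space} (A : X -> Prop) : Prop := opens X A.
Definition is_closed {X : space} (A : X -> Prop) : Prop := opn (fun x => ~ A x).

Definition rel_open_in {X : space} (A B : X -> Prop) : Prop :=
  (forall x, A x -> B x) /\
  exists V, opn V /\ forall x, A x <-> (V x /\ B x).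

Definition continuous_on {X Y : space} (D : X -> Prop) (f : X -> Y) : Prop :=
  forall V, opn V -> exists W, opn W /\ forall x, D x -> (V (f x) <-> W x).

Definition continuous {X Y : space} (f : X -> Y) : Prop :=
  continuous_on (fun _ => True) f.

Definition embedding_on {X Y : space} (D : X -> Prop) (f : X -> Y) : Prop :=
  (forall x y, D x -> D y -> f x = f y -> x = y) /\
  continuous_on D f /\
  (forall W, opn W -> exists V, opn V /\ forall x, D x -> (W x <-> V (f x))).

Definition homeo_onto {X Y : space} (D : X -> Prop) (f : X -> Y) (F : Y -> Prop)
  : Prop :=
  embedding_on D f /\ forall y, F y <-> exists x, D x /\ f x = y.

Definition compact_set {X : space} (K : X -> Prop) : Prop :=
  forall (I : Type) (V : I -> X -> Prop),
    (forall i, opn (V i)) -> (forall x, K x -> exists i, V i x) ->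
    exists l : list I, forall x, K x -> exists i, List.In i l /\ V i x.

Definition compact (X : space) : Prop := compact_set (fun _ : X => True).

Definition locally_compact (X : space) : Prop :=
  forall x : X, exists (K V : X -> Prop),
    compact_set K /\ opn V /\ V x /\ forall y, V y -> K y.

Definition separable (X : space) : Prop :=
  exists D : X -> Prop,
    (exists e : nat -> option X, forall x, D x -> exists n, e n = Some x) /\
    forall V, opn V -> (exists x, V x) -> exists x, V x /\ D x.

Definition is_metric {T : Type} (d : T -> T -> R) : Prop :=
  (forall x y, d x y = R0 <-> x = y) /\
  (forall x y, d x y = d y x) /\
  (forall x y z, Rle (d x z) (Rplus (d x y) (d y z))).

Definition metrizable (X : space) : Prop :=
  exists d : X -> X -> R, is_metric d /\
    forall V : X -> Prop, opn V <->
      (forall x, V x -> exists eps, Rlt R0 eps /\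
                   forall y, Rlt (d x y) eps -> V y).


Record chart (X : space) := Chart {
  cU : space;
  cE : space;
  cpr : cE -> cU;
  czero : cU -> cE;
  cs : cU -> cE;
  cpsi : cU -> X;
  cF : X -> Prop }.

Arguments cU {X} c.
Arguments cE {X} c.
Arguments cpr {X} c _.
Arguments czero {X} c _.
Arguments cs {X} c _.
Arguments cpsi {X} c _.
Arguments cF {X} c _.

Definition zset {X : space} (c : chart X) (x : cU c) : Prop :=
  cs c x = czero c x.

Definition is_chart {X : space} (c : chart X) : Prop :=
  [/\ separable (cU c), locally_compact (cU c), metrizable (cU c),
      separable (cE c) &
  [/\ locally_compact (cE c), metrizable (cE c),
      continuous (cpr c), continuous (czero c) &
  [/\ (forall x, cpr c (czero c x) = x),
      continuous (cs c), (forall x, cpr c (cs c x) = x),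
      opn (cF c) & homeo_onto (zset c) (cpsi c) (cF c)]]].

(* Atlas data: charts K_I indexed by subsets I of {1..N} (as 'I_N),     *)
(* basic charts K_i := K_{{i}}, domains U_IJ, maps phi_IJ, Phi_IJ, and  *)
(* filtration E_IJ.  Functions defined on subsets are represented by    *)
(* total functions; only their restriction to the domain matters.       *)

Record atlas_data (X : space) (N : nat) := AtlasData {
  aK : {set 'I_N} -> chart X;
  aU : forall I J : {set 'I_N}, cU (aK I) -> Prop;
  aphi : forall I J : {set 'I_N}, cU (aK I) -> cU (aK J);
  aPhi : forall I J : {set 'I_N}, cE (aK I) -> cE (aK J);
  aEE : forall I J : {set 'I_N}, cE (aK J) -> Prop }.

Arguments aK {X N} a _.
Arguments aU {X N} a I J _.
Arguments aphi {X N} a I J _.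
Arguments aPhi {X N} a I J _.
Arguments aEE {X N} a I J _.

Section AtlasDefs.
Context {X : space} {N : nat} (A : atlas_data X N).

Local Notation K := (aK A).
Local Notation U := (aU A).
Local Notation phi := (aphi A).
Local Notation Phi := (aPhi A).
Local Notation EE := (aEE A).

Definition Fint (I : {set 'I_N}) (x : X) : Prop :=
  forall i, i \in I -> cF (K [set i]) x.

Definition inIK (I : {set 'I_N}) : Prop := I != set0 /\ exists x, Fint I x.

Definition imphi (I J : {set 'I_N}) (y : cU (K J)) : Prop :=
  exists x, U I J x /\ phi I J x = y.

Definition imPhi (I J : {set 'I_N}) (e : cE (K J)) : Prop :=
  exists e', U I J (cpr (K I) e') /\ Phi I J e' = e.

Definition coord_change (I J : {set 'I_N}) : Prop :=
  [/\ opn (U I J),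
      (forall x, (U I J x /\ zset (K I) x) <->
                 (zset (K I) x /\ cF (K I) (cpsi (K I) x) /\ cF (K J) (cpsi (K I) x))),
      embedding_on (fun e => U I J (cpr (K I) e)) (Phi I J),
      embedding_on (U I J) (phi I J) &
  [/\ (forall e, U I J (cpr (K I) e) ->
         cpr (K J) (Phi I J e) = phi I J (cpr (K I) e)),
      (forall x, U I J x -> czero (K J) (phi I J x) = Phi I J (czero (K I) x)),
      (forall x, U I J x -> cs (K J) (phi I J x) = Phi I J (cs (K I) x)) &
      (forall x, U I J x -> zset (K I) x ->
         zset (K J) (phi I J x) /\ cpsi (K J) (phi I J x) = cpsi (K I) x)]].

Definition UIJK (I J L : {set 'I_N}) (x : cU (K I)) : Prop :=
  U I J x /\ U J L (phi I J x).

Definition weak_atlas : Prop :=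
  [/\
      (forall i, is_chart (K [set i])),
      (forall x, exists i, cF (K [set i]) x),
      (forall J : {set 'I_N}, inIK J -> is_chart (K J) /\ forall x, cF (K J) x <-> Fint J x),
      (forall I J : {set 'I_N}, inIK I -> inIK J -> I \proper J -> coord_change I J) &
  [/\
      (forall I : {set 'I_N}, inIK I ->
         [/\ forall x, U I I x, forall x, phi I I x = x & forall e, Phi I I e = e]) &
      (forall I J L : {set 'I_N}, inIK I -> inIK J -> inIK L -> I \proper J -> J \proper L ->
         forall e, UIJK I J L (cpr (K I) e) -> U I L (cpr (K I) e) ->
           Phi J L (Phi I J e) = Phi I L e)]].

Definition top_atlas : Prop :=
  weak_atlas /\
  (forall I J L : {set 'I_N}, inIK I -> inIK J -> inIK L -> I \proper J -> J \proper L ->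
     forall x, UIJK I J L x -> U I L x).

Definition filtered : Prop :=
  [/\
      (forall I J : {set 'I_N}, inIK J -> I \subset J -> is_closed (EE I J)),
      (forall J : {set 'I_N}, inIK J ->
         (forall e, EE J J e) /\
         (forall e, EE set0 J e <-> exists x, czero (K J) x = e)),
      (* (ii) *)
      (forall I J L : {set 'I_N}, inIK J -> inIK L -> I \subset J -> J \proper L ->
         forall e, (exists e', U J L (cpr (K J) e') /\ EE I J e' /\ Phi J L e' = e)
                   <-> (EE I L e /\ imphi J L (cpr (K L) e))),
      (* (iii) *)
      (forall I H J : {set 'I_N}, inIK J -> I \subset J -> H \subset J ->
         forall e, (EE I J e /\ EE H J e) <-> EE (I :&: H) J e) &
      (forall I J : {set 'I_N}, inIK I -> inIK J -> I \proper J ->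
         rel_open_in (imphi I J) (fun y => EE I J (cs (K J) y)))].

Definition tame : Prop :=
  (forall I J L : {set 'I_N}, inIK I -> inIK J -> inIK L -> I \subset J -> I \subset L ->
     forall x, (U I J x /\ U I L x) <-> (inIK (J :|: L) /\ U I (J :|: L) x)) /\
  (forall I J L : {set 'I_N}, inIK I -> inIK J -> inIK L -> I \subset J -> J \subset L ->
     forall y, (exists x, U I L x /\ phi I J x = y) <->
               (U J L y /\ EE I J (cs (K J) y))).

Definition tame_top_atlas : Prop := top_atlas /\ filtered /\ tame.

End AtlasDefs.

(* Main.v *)
Require Import Defs.
From mathcomp Require Import all_boot.
From Stdlib Require Import FunctionalExtensionality PropExtensionality Classical.

Lemma opn_ext (T : space) (W P : T -> Prop) :
  opn W -> (forall x, W x <-> P x) -> opn P.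
Proof.
move=> hW hWP.
have -> : P = W.
  apply: functional_extensionality => x; apply: propositional_extensionality.
  by split => /hWP.
exact: hW.
Qed.

Lemma opn_union (T : space) (V W : T -> Prop) :
  opn V -> opn W -> opn (fun x => V x \/ W x).
Proof.
move=> hV hW.
have [_ [_ [_ hU]]] := opens_topology T.
apply: (@opn_ext T (fun x => exists b : bool, (if b then V else W) x)).
  by apply: hU => -[].
by move=> x; split => [[[] h]|[h|h]]; [left|right|exists true|exists false].
Qed.

Theorem mainTheorem5 (X : space) (N : nat) (A : atlas_data X N) :
  compact X -> metrizable X -> tame_top_atlas A ->
  (forall I J : {set 'I_N}, inIK A I -> inIK A J -> I \subset J ->
     [/\ (forall y, imphi A I J y <-> aEE A I J (cs (aK A J) y)),
         (forall e, imPhi A I J e <->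
                    (aEE A I J e /\ aEE A I J (cs (aK A J) (cpr (aK A J) e)))),
         is_closed (imphi A I J) &
         is_closed (imPhi A I J)]) /\
  (forall J H I : {set 'I_N}, inIK A J -> inIK A H -> inIK A I ->
     H \subset J -> I \subset J ->
     (H :&: I != set0 ->
        forall y, (imphi A H J y /\ imphi A I J y) <-> imphi A (H :&: I) J y) /\
     (H :&: I = set0 ->
        forall y, (imphi A H J y /\ imphi A I J y) <-> zset (aK A J) y)).
Proof.
move=> _ _ [[[hc hcov hK hcc [hid hwc]] hcoc] [[fc fi fii fiii fiv] [t1 t2]]].
have P1 : forall I J : {set 'I_N}, inIK A I -> inIK A J -> I \subset J ->
    forall y, imphi A I J y <-> aEE A I J (cs (aK A J) y).
  move=> I J hI hJ hIJ y.
  have [h1 _ _] := hid J hJ.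
  rewrite /imphi (t2 I J J hI hJ hJ hIJ (subxx J) y).
  by split => [[]|] //.
split.
  move=> I J hI hJ hIJ.
  have [hchJ _] := hK J hJ.
  case: hchJ => _ _ _ _ [_ _ hprc _] [_ hsc _ _ _].
  have hP1 := P1 I J hI hJ hIJ.
  have P2 : forall e, imPhi A I J e <->
      (aEE A I J e /\ aEE A I J (cs (aK A J) (cpr (aK A J) e))).
    move=> e.
    case: (boolP (I == J)) => [/eqP hIJe|hne]; first subst J.
      have [h1 h2 h3] := hid I hI.
      have [hE _] := fi I hI.
      split=> _; last by exists e; rewrite h3.
      by split; apply: hE.
    have hp : I \proper J by rewrite properEneq hne.
    have [hE _] := fi I hI.
    rewrite -hP1 -(fii I I J hI hJ (subxx I) hp e).
    split=> [[e' [h1 h2]]|[e' [h1 [_ h2]]]]; exists e'; by [].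
  split => //.
  - rewrite /is_closed.
    have [W [hW hWx]] := hsc _ (fc I J hJ hIJ).
    apply: (@opn_ext _ _ _ hW) => y; rewrite hP1.
    by split => [/(hWx y Logic.I)|/(hWx y Logic.I)].
  - rewrite /is_closed.
    have [W [hW hWx]] := hsc _ (fc I J hJ hIJ).
    have [W' [hW' hW'x]] := hprc _ hW.
    apply: (@opn_ext _ _ _ (@opn_union _ _ _ (fc I J hJ hIJ) hW')) => e; rewrite P2.
    split.
      case=> [h [h1 h2]|h [h1 h2]]; first by apply: h.
      exact: (proj2 (hWx _ Logic.I) (proj2 (hW'x e Logic.I) h) h2).
    move=> h.
    case: (classic (aEE A I J e)) => hE; last by left.
    right; apply: (proj1 (hW'x e Logic.I)); apply: (proj1 (hWx _ Logic.I)) => h2; exact: h.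
move=> J H I hJ hH hI hHJ hIJ.
split.
  move=> hne y.
  have hHI : inIK A (H :&: I).
    split => //; case: hH => _ [x hx]; exists x => i /setIP [hi _]; exact: hx.
  rewrite (P1 _ _ hHI hJ (subset_trans (subsetIl H I) hHJ)).
  rewrite (P1 _ _ hH hJ hHJ) (P1 _ _ hI hJ hIJ).
  exact: fiii.
move=> h0 y.
rewrite (P1 _ _ hH hJ hHJ) (P1 _ _ hI hJ hIJ) (fiii H I J hJ hHJ hIJ).
have [_ hE0] := fi J hJ.
rewrite h0 hE0 /zset.
have [hchJ _] := hK J hJ.
case: hchJ => _ _ _ _ [_ _ _ _] [hpz _ hps _ _].
split => [[x hx]|->]; last by exists y.
have hxy : x = y by rewrite -(hpz x) hx hps.
by rewrite -hx hxy.
Qed.
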